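(* Let $x\in\mathcal{X}(\mathbb{Z}_S)$. For a cocycle $a(x)=a_1(x)+a_2(x):G_T\to U_2$ representing the class of $\pi_1^{u,\mathbb{Q}_p}(\bar X;b,x)$ in $H^1(G_T,U_2)$ and a cochain $b_x:G_T\to L_1$ with $db_x=c\cup a_1(x)$, let $\phi_x=b_x\cup a_1(x)-2c\cup a_2(x)$. Then the class $$[\phi_x]\in H^2(G_T,Z)\big/\big[H^1(G_T,L_1)\cup a_1(x)\big]$$ is independent of the choice of the representing cocycle $a(x)$ (and of $b_x$).
   Context: Setting. $E$ is an elliptic curve over $\mathbb{Q}$ with origin $e$ and $\operatorname{ord}_{s=1}L(E,s)=1$, $X=E\setminus\{e\}$, $\mathcal{X}$ the complement of the closure of $e$ in a regular minimal model over $\mathbb{Z}$; $p$ an odd prime of good reduction; $S$ a finite set of places containing $\infty$ and the bad primes, $T=S\cup\{p\}$, $G_T$ the Galois group of the maximal extension of $\mathbb{Q}$ unramified outside $T$. $b$ is a nonzero rational tangent vector at $e$ (tangential base point). $U=\pi_1^{u,\mathbb{Q}_p}(\bar X,b)$, $U_2=U^3\backslash U$, $L=\mathrm{Lie}\,U$, $L_2=L/L^3$, $L_1=L/L^2$, $Z=L^2/L^3\cong\mathbb{Q}_p(1)$; the logarithm identifies $U_2$ with $L_2$, and $L_2=L_1\oplus Z$ via the $G$-equivariant splitting $x\mapsto\frac12(x'-I(x'))$, with $I$ induced by $[-1]$ and the canonical path from $-b$ to $b$. Group law $(l_1+l_2)*(l_1'+l_2')=(l_1+l_1')+(l_2+l_2'+\frac12[l_1,l_1'])$.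 A cocycle $a=a_1+a_2$ into $U_2$: $a_1$ is an $L_1$-valued cocycle and $da_2=-\frac12 a_1\cup a_1$; $H^1(G_T,U_2)$ is the quotient of cocycles by $(u\cdot a)(g)=u\,a(g)\,g(u)^{-1}$. Cup products: $(c\cup c')(g,h)=[c(g),gc'(h)]$ for $L_1$-valued cochains, $(c\cup a)(g,h)=c(g)\,ga(h)$ for $\mathbb{Q}_p$-valued $c$. $c=\log\chi$ with $\chi$ the $p$-adic cyclotomic character. (Such $b_x$ exists under the hypothesis on $E$.) *)

(* Defs.v *)
From mathcomp Require Import all_boot all_order all_algebra.
From mathcomp Require Import monoid.

Set Implicit Arguments.
Unset Strict Implicit.
Unset Printing Implicit Defensive.

Import GRing.Theory.
Local Open Scope ring_scope.

Definition topology (T : Type) := (T -> Prop) -> Prop.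

Definition is_topology (T : Type) (op : topology T) : Prop :=
  [/\ op (fun _ => True),
      (forall U V, op U -> op V -> op (fun x => U x /\ V x)) &
      (forall (I : Type) (F : I -> T -> Prop),
          (forall i, op (F i)) -> op (fun x => exists i, F i x))].

Definition prod_top (A B : Type) (opA : topology A) (opB : topology B)
  : topology (A * B) :=
  fun W => forall x y, W (x, y) ->
    exists U V, [/\ opA U, opB V, U x, V y &
                    forall x' y', U x' -> V y' -> W (x', y')].

Definition cont (A B : Type) (opA : topology A) (opB : topology B)
  (f : A -> B) : Prop :=
  forall V, opB V -> opA (fun x => V (f x)).

Definition cont2 (A B C : Type) (opA : topology A) (opB : topology B)
  (opC : topology C) (f : A -> B -> C) : Prop :=
  cont (prod_top opA opB) opC (fun p => f p.1 p.2).

Section Setting.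
Variables (K : fieldType) (G : groupType).

Definition is_lin_action (M : lmodType K) (act : G -> M -> M) : Prop :=
  [/\ (forall x, act 1%g x = x),
      (forall g h x, act (g * h)%g x = act g (act h x)),
      (forall g x y, act g (x + y) = act g x + act g y) &
      (forall g (k : K) x, act g (k *: x) = k *: act g x)].

Definition is_equiv_bracket (L1 Z : lmodType K)
  (actL : G -> L1 -> L1) (actZ : G -> Z -> Z) (br : L1 -> L1 -> Z) : Prop :=
  [/\ (forall x y z, br (x + y) z = br x z + br y z),
      (forall x y z, br x (y + z) = br x y + br x z),
      (forall (k : K) x y, br (k *: x) y = k *: br x y),
      (forall x, br x x = 0) &
      (forall g x y, actZ g (br x y) = br (actL g x) (actL g y))].

Definition d1 (M : zmodType) (act : G -> M -> M) (f : G -> M) : G -> G -> M :=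
  fun g h => act g (f h) - f (g * h)%g + f g.

Definition is_cocycle1 (M : zmodType) (act : G -> M -> M) (f : G -> M) :=
  forall g h, d1 act f g h = 0.

Definition cupL (L1 Z : lmodType K) (actL : G -> L1 -> L1)
  (br : L1 -> L1 -> Z) (f f' : G -> L1) : G -> G -> Z :=
  fun g h => br (f g) (actL g (f' h)).

Definition cupK (M : lmodType K) (act : G -> M -> M)
  (c : G -> K) (a : G -> M) : G -> G -> M :=
  fun g h => c g *: act g (a h).

(* The group U_2 = L_1 (+) Z with the law                              *)
(*   (l1+l2)*(l1'+l2') = (l1+l1') + (l2+l2'+ 1/2 [l1,l1'])             *)

Variables (L1 Z : lmodType K).

Definition mulU2 (br : L1 -> L1 -> Z) (x y : L1 * Z) : L1 * Z :=
  (x.1 + y.1, x.2 + y.2 + 2%:R^-1 *: br x.1 y.1).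

Definition invU2 (x : L1 * Z) : L1 * Z := (- x.1, - x.2).

Definition actU2 (actL : G -> L1 -> L1) (actZ : G -> Z -> Z)
  (g : G) (x : L1 * Z) : L1 * Z := (actL g x.1, actZ g x.2).

Definition is_U2_cocycle (actL : G -> L1 -> L1) (actZ : G -> Z -> Z)
  (br : L1 -> L1 -> Z) (a1 : G -> L1) (a2 : G -> Z) : Prop :=
  is_cocycle1 actL a1 /\
  forall g h, d1 actZ a2 g h = - (2%:R^-1 *: cupL actL br a1 a1 g h).

Definition U2_cohomologous (actL : G -> L1 -> L1) (actZ : G -> Z -> Z)
  (br : L1 -> L1 -> Z) (a1 : G -> L1) (a2 : G -> Z)
  (a1' : G -> L1) (a2' : G -> Z) : Prop :=
  exists u : L1 * Z, forall g,
    (a1' g, a2' g) =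
    mulU2 br (mulU2 br u (a1 g, a2 g)) (invU2 (actU2 actL actZ g u)).

Definition phi_of (actL : G -> L1 -> L1) (actZ : G -> Z -> Z)
  (br : L1 -> L1 -> Z) (c : G -> K) (b a1 : G -> L1) (a2 : G -> Z)
  : G -> G -> Z :=
  fun g h => cupL actL br b a1 g h - 2%:R *: cupK actZ c a2 g h.

End Setting.

(* Main.v *)
Require Import Defs.
From mathcomp Require Import all_boot all_order all_algebra.
From mathcomp Require Import monoid.
From mathcomp Require Import ring.
Import GRing.Theory.
Local Open Scope ring_scope.

Definition phi (M : zmodType) (xs : seq M) (p : {poly int}) : M :=
  \sum_(i < size xs) xs`_i *~ p`_i.

Lemma phiD (M : zmodType) (xs : seq M) p q : phi _ xs (p + q) = phi _ xs p + phi _ xs q.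
Proof. by rewrite /phi -big_split; apply: eq_bigr => i _; rewrite coefD mulrzDr. Qed.

Lemma phiN (M : zmodType) (xs : seq M) p : phi _ xs (- p) = - phi _ xs p.
Proof. by rewrite /phi -sumrN; apply: eq_bigr => i _; rewrite coefN mulrNz. Qed.

Lemma phiX (M : zmodType) (xs : seq M) (i : nat) : (i < size xs)%N -> phi _ xs 'X^i = xs`_i.
Proof.
move=> hi; rewrite /phi (bigD1 (Ordinal hi)) //= coefXn eqxx mulr1z big1 ?addr0 //.
by move=> j /eqP hj; rewrite coefXn; case: eqP => // e; case: hj; apply: val_inj.
Qed.


Lemma zid (M : zmodType) (x0 x1 x2 x3 x4 x5 x6 x7 x8 x9 x10 x11 : M) :
  x0 + x1 - x2 - (x8 + x9 + x4 - x10 + (- x5 - x6)) - (x3 - x9) =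
  x1 - x3 - x4 + (x7 - x11 - (x7 + x2 - (x5 + x6) - (x10 + x11)) + (x0 - x8)).
Proof.
pose xs := [:: x0; x1; x2; x3; x4; x5; x6; x7; x8; x9; x10; x11].
rewrite -[x0](@phiX M xs 0 erefl) -[x1](@phiX M xs 1 erefl) -[x2](@phiX M xs 2 erefl).
rewrite -[x3](@phiX M xs 3 erefl) -[x4](@phiX M xs 4 erefl) -[x5](@phiX M xs 5 erefl).
rewrite -[x6](@phiX M xs 6 erefl) -[x7](@phiX M xs 7 erefl) -[x8](@phiX M xs 8 erefl).
rewrite -[x9](@phiX M xs 9 erefl) -[x10](@phiX M xs 10 erefl) -[x11](@phiX M xs 11 erefl).
do 6 rewrite -?phiN -?phiD.
congr phi; ring.
Qed.

Lemma phi0 (M : zmodType) (xs : seq M) : phi M xs 0 = 0.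
Proof. by rewrite /phi big1 // => i _; rewrite coef0 mulr0z. Qed.

Lemma zid2 (M : zmodType) (x0 x1 x2 x3 x4 x5 x6 x7 : M) :
  x0 - x1 - x2 - (x0 + x3 - (x4 + x5 - x6) - (x1 + x7 - x5) - (x6 + x2)) + (x3 - x7 - x4) = 0.
Proof.
pose xs := [:: x0; x1; x2; x3; x4; x5; x6; x7].
rewrite -[x0](@phiX M xs 0 erefl) -[x1](@phiX M xs 1 erefl) -[x2](@phiX M xs 2 erefl).
rewrite -[x3](@phiX M xs 3 erefl) -[x4](@phiX M xs 4 erefl) -[x5](@phiX M xs 5 erefl).
rewrite -[x6](@phiX M xs 6 erefl) -[x7](@phiX M xs 7 erefl) -(phi0 M xs).
do 6 rewrite -?phiN -?phiD.
congr phi; ring.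
Qed.

Set Implicit Arguments. Unset Strict Implicit.
From Stdlib Require Import Classical FunctionalExtensionality PropExtensionality.

Lemma cont_comp (A B C : Type) (opA : topology A) (opB : topology B) (opC : topology C)
  (f : A -> B) (g : B -> C) : cont opA opB f -> cont opB opC g -> cont opA opC (fun x => g (f x)).
Proof. by move=> hf hg V hV; exact: (hf _ (hg _ hV)). Qed.

Lemma cont_pair (X A B : Type) (opX : topology X) (opA : topology A) (opB : topology B)
  (f1 : X -> A) (f2 : X -> B) : is_topology opX -> cont opX opA f1 -> cont opX opB f2 ->
  cont opX (prod_top opA opB) (fun x => (f1 x, f2 x)).
Proof.
move=> [_ hI hU] h1 h2 W hW.
pose I := {p : (A -> Prop) * (B -> Prop) | opA p.1 /\ opB p.2 /\ forall x y, p.1 x -> p.2 y -> W (x, y)}.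
pose F := fun (i : I) (x : X) => (sval i).1 (f1 x) /\ (sval i).2 (f2 x).
have -> : (fun x => W (f1 x, f2 x)) = (fun x => exists i, F i x).
  apply: functional_extensionality => x; apply: propositional_extensionality; split.
    move=> /hW [U [V [oU oV Ux Vy HUV]]].
    by exists (exist _ (U, V) (conj oU (conj oV HUV))); split.
  by move=> [[[U V] [oU [oV HUV]]] [/= Hx Hy]]; apply: HUV.
apply: hU => -[[U V] [oU [oV HUV]]]; rewrite /F /=.
by apply: hI; [apply: h1 | apply: h2].
Qed.

Lemma cont_app2 (X A B C : Type) (opX : topology X) (opA : topology A) (opB : topology B)
  (opC : topology C) (h : A -> B -> C) (f1 : X -> A) (f2 : X -> B) :
  is_topology opX -> cont2 opA opB opC h -> cont opX opA f1 -> cont opX opB f2 ->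
  cont opX opC (fun x => h (f1 x) (f2 x)).
Proof.
move=> tX hh h1 h2.
have H := cont_comp (cont_pair tX h1 h2) hh; exact: H.
Qed.

Lemma cont_const (X A : Type) (opX : topology X) (opA : topology A) (a : A) :
  is_topology opX -> cont opX opA (fun _ => a).
Proof.
move=> [hT _ hU] V _.
case: (classic (V a)) => Ha.
  have -> : (fun _ : X => V a) = (fun _ => True).
    by apply: functional_extensionality => x; apply: propositional_extensionality.
  exact: hT.
have -> : (fun _ : X => V a) = (fun x => exists i : False, (fun _ _ => True) i x).
  apply: functional_extensionality => x; apply: propositional_extensionality; split => //.
  by case.
by apply: hU => -[].
Qed.

Lemma act_props (K : fieldType) (G : groupType) (M : lmodType K) (act : G -> M -> M) :
  is_lin_action act ->
  [/\ forall g x, act g (- x) = - act g x,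
      forall g, act g 0 = 0 &
      forall g x y, act g (x - y) = act g x - act g y].
Proof.
case=> _ _ hD _.
have h0 g : act g 0 = 0.
  by apply: (addrI (act g 0)); rewrite -hD !addr0.
have hN g x : act g (- x) = - act g x.
  by apply/eqP; rewrite -subr_eq0 opprK -hD addNr h0.
by split => // g x y; rewrite hD hN.
Qed.

Lemma br_props (K : fieldType) (G : groupType) (L1 Z : lmodType K) actL actZ
  (br : L1 -> L1 -> Z) : @is_equiv_bracket K G L1 Z actL actZ br ->
  [/\ (forall x y, br x y = - br y x),
      (forall x y, br x (- y) = - br x y),
      (forall x y, br (- x) y = - br x y) &
      (forall k x y, br x (k *: y) = k *: br x y)].
Proof.
case=> hDl hDr hZl hA _.
have anti x y : br x y = - br y x.
  have := hA (x + y); rewrite hDl !hDr !hA add0r addr0.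
  by move/eqP; rewrite addr_eq0 => /eqP.
have hNl x y : br (- x) y = - br x y.
  by rewrite -scaleN1r hZl scaleN1r.
split => //.
- by move=> x y; rewrite anti hNl -anti.
- by move=> k x y; rewrite anti hZl -scalerN -anti.
Qed.
From mathcomp Require Import ring.
Import GRing.Theory.
Local Open Scope ring_scope.

Unset Implicit Arguments.
Theorem lemma2p2
  (K : fieldType) (G : groupType) (L1 Z : lmodType K)
  (* topologies: G = G_T profinite group, K = Q_p, L1 and Z = Q_p(1) *)
  (opG : topology G) (opK : topology K)
  (opL : topology L1) (opZ : topology Z)
  (tG : is_topology opG) (tK : is_topology opK)
  (tL : is_topology opL) (tZ : is_topology opZ)
  (* G is a topological group *)
  (mulG_cont : cont2 opG opG opG (fun g h => (g * h)%g))
  (invG_cont : cont opG opG (fun g => (g^-1)%g))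
  (* K is a topological field (ring operations continuous) *)
  (addK_cont : cont2 opK opK opK (fun x y => x + y))
  (oppK_cont : cont opK opK (fun x => - x))
  (mulK_cont : cont2 opK opK opK (fun x y => x * y))
  (* L1 and Z are topological K-vector spaces *)
  (addL_cont : cont2 opL opL opL (fun x y => x + y))
  (oppL_cont : cont opL opL (fun x => - x))
  (scaleL_cont : cont2 opK opL opL (fun k x => k *: x))
  (addZ_cont : cont2 opZ opZ opZ (fun x y => x + y))
  (oppZ_cont : cont opZ opZ (fun x => - x))
  (scaleZ_cont : cont2 opK opZ opZ (fun k x => k *: x))
  (* 2 is invertible in K (char Q_p = 0) *)
  (two_neq0 : (2%:R : K) != 0)
  (* continuous linear G-actions on L1 and Z *)
  (actL : G -> L1 -> L1) (actZ : G -> Z -> Z)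
  (hactL : is_lin_action actL) (hactZ : is_lin_action actZ)
  (actL_cont : cont2 opG opL opL actL)
  (actZ_cont : cont2 opG opZ opZ actZ)
  (* the commutator bracket L1 x L1 -> Z = L^2/L^3 *)
  (br : L1 -> L1 -> Z) (hbr : is_equiv_bracket actL actZ br)
  (br_cont : cont2 opL opL opZ br)
  (* c = log chi : a continuous homomorphism G -> K *)
  (c : G -> K) (c_cont : cont opG opK c)
  (c_hom : forall g h, c (g * h)%g = c g + c h)
  (* two continuous cocycles a = a1 + a2, a' = a1' + a2' into U_2
     representing the same class in H^1(G_T, U_2) *)
  (a1 a1' : G -> L1) (a2 a2' : G -> Z)
  (a1_cont : cont opG opL a1) (a2_cont : cont opG opZ a2)
  (a1'_cont : cont opG opL a1') (a2'_cont : cont opG opZ a2')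
  (ha : is_U2_cocycle actL actZ br a1 a2)
  (ha' : is_U2_cocycle actL actZ br a1' a2')
  (hcoh : U2_cohomologous actL actZ br a1 a2 a1' a2')
  (* continuous cochains b, b' with db = c u a1, db' = c u a1' *)
  (b b' : G -> L1) (b_cont : cont opG opL b) (b'_cont : cont opG opL b')
  (hb : forall g h, d1 actL b g h = cupK actL c a1 g h)
  (hb' : forall g h, d1 actL b' g h = cupK actL c a1' g h) :
  (* [phi'] = [phi] in H^2(G_T, Z) / [H^1(G_T, L1) u a1] *)
  exists (e : G -> L1) (psi : G -> Z),
    [/\ cont opG opL e, is_cocycle1 actL e, cont opG opZ psi &
        forall g h,
          phi_of actL actZ br c b' a1' a2' g h - phi_of actL actZ br c b a1 a2 g h
          = cupL actL br e a1 g h + d1 actZ psi g h].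
Proof.
have [actLN actL0 actLB] := act_props hactL.
have [actZN actZ0 actZB] := act_props hactZ.
have [actL1 actLM actLD actLZ] := hactL.
have [actZ1 actZM actZD actZZ] := hactZ.
have [brDl brDr brZl brA brE] := hbr.
have [anti brNr brNl brZr] := br_props hbr.
case: hcoh => -[v w] hu.
have ha1' g : a1' g = v + a1 g - actL g v := f_equal fst (hu g).
have ha2' g : a2' g = w + a2 g + 2%:R^-1 *: br v (a1 g) - actZ g w
     + 2%:R^-1 *: br (v + a1 g) (- actL g v) := f_equal snd (hu g).
exists (fun g => b' g - b g - c g *: actL g v).
exists (fun g => br (b' g) (actL g v) - 2%:R *: (c g *: actZ g w)).
split.
- apply: (cont_app2 tG addL_cont (f1 := fun g => b' g - b g) (f2 := fun g => - (c g *: actL g v))).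
    apply: (cont_app2 tG addL_cont (f1 := b') (f2 := fun g => - b g)) => //.
    exact: (cont_comp b_cont oppL_cont).
  apply: (cont_comp (f := fun g => c g *: actL g v) _ oppL_cont).
  apply: (cont_app2 tG scaleL_cont (f1 := c) (f2 := fun g => actL g v)) => //.
  apply: (cont_app2 tG actL_cont (f1 := id) (f2 := fun _ => v)) => //.
  exact: cont_const.
- move=> g h; rewrite /d1.
  have hbgh : b' (g * h)%g = actL g (b' h) + b' g - c g *: actL g (a1' h).
    have := hb' g h; rewrite /d1 /cupK => <-.
    by rewrite [X in _ - X]addrAC opprB [RHS]addrC subrK.
  have hbgh2 : b (g * h)%g = actL g (b h) + b g - c g *: actL g (a1 h).
    have := hb g h; rewrite /d1 /cupK => <-.
    by rewrite [X in _ - X]addrAC opprB [RHS]addrC subrK.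
  rewrite hbgh hbgh2 c_hom ha1'.
  rewrite !(actLD, actLB, actLZ, actLN) -?actLM !(scalerDr, scalerN, scalerDl).
  move: (actL g (b' h)) (actL g (b h)) (b' g) (b g) (actL g v) (actL (g * h)%g v) (actL g (a1 h)).
  move: (c g) (c h) => C Ch Bh' Bh B' Bb P Q A.
  exact: zid2.
- apply: (cont_app2 tG addZ_cont (f1 := fun g => br (b' g) (actL g v)) (f2 := fun g => - (2%:R *: (c g *: actZ g w)))).
    apply: (cont_app2 tG br_cont (f1 := b') (f2 := fun g => actL g v)) => //.
    apply: (cont_app2 tG actL_cont (f1 := id) (f2 := fun _ => v)) => //.
    exact: cont_const.
  apply: (cont_comp (f := fun g => 2%:R *: (c g *: actZ g w)) _ oppZ_cont).
  apply: (cont_app2 tG scaleZ_cont (f1 := fun _ => 2%:R) (f2 := fun g => c g *: actZ g w)).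
    exact: cont_const.
  apply: (cont_app2 tG scaleZ_cont (f1 := c) (f2 := fun g => actZ g w)) => //.
  apply: (cont_app2 tG actZ_cont (f1 := id) (f2 := fun _ => w)) => //.
  exact: cont_const.
move=> g h.
rewrite /phi_of /cupL /cupK /d1.
have hbgh : b' (g * h)%g = actL g (b' h) + b' g - c g *: actL g (a1' h).
  have := hb' g h; rewrite /d1 /cupK => <-.
  by rewrite [X in _ - X]addrAC opprB [RHS]addrC subrK.
rewrite hbgh c_hom ha1' ha2'.
rewrite !(actLD, actLB, actZD, actZB, actZZ, actLZ, actLN, actZN, brE) -?actLM -?actZM.
move: (b' g) (b g) (actL g (b' h)) (actL g v) (actL (g * h)%g v) (actL g (a1 h)).
move: (actZ g w) (actZ (g * h)%g w) (actZ g (a2 h)) (c g) (c h).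
move=> W1 W2 A2 C Ch B' Bb Bh P Q A.
rewrite !(brDl, brDr, brNl, brNr, brZl, brZr, brA) !(scalerDr, scalerN, scalerA, scalerDl, scaler0, oppr0, addr0).
have h2 : 2 * C / 2 = C by rewrite mulrAC mulfV // mul1r.
rewrite h2 mulrDr scalerDl.
exact: zid.
Qed.
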